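(* Let $(S,A,P,R,\mu,\gamma)$ be a Markov decision process with discount factor $\gamma\in(0,1)$ and rewards bounded with $R_{\max}=\max_{s,a}R(s,a)$. Let $\pi_{\text{human}}$ and $\pi_{\text{AV}}$ be policies, let $\mathcal{T}:S\to\{0,1\}$ be a switch function, and define the mixed behavior policy $\pi_{\text{mix}}(\cdot\mid s)=\mathcal{T}(s)\,\pi_{\text{human}}(\cdot\mid s)+(1-\mathcal{T}(s))\,\pi_{\text{AV}}(\cdot\mid s)$. Assume $\mathbb{E}_{s\sim d_{\pi_{\text{mix}}}}\|\pi_{\text{human}}(\cdot\mid s)-\pi_{\text{AV}}(\cdot\mid s)\|_1>0$ and let $$\beta=\frac{\mathbb{E}_{s\sim d_{\pi_{\text{mix}}}}\left\|\mathcal{T}(s)\left[\pi_{\text{human}}(\cdot\mid s)-\pi_{\text{AV}}(\cdot\mid s)\right]\right\|_1}{\mathbb{E}_{s\sim d_{\pi_{\text{mix}}}}\|\pi_{\text{human}}(\cdot\mid s)-\pi_{\text{AV}}(\cdot\mid s)\|_1}.$$ Let $\pi^*_{\text{AV}}$ be an optimal policy, i.e. one maximizing $J$. Then $$\left|J(\pi^*_{\text{AV}})-J(\pi_{\text{AV}})\right|\le \frac{\beta R_{\max}}{(1-\gamma)^2}\,\mathbb{E}_{s\sim d_{\pi_{\text{mix}}}}\|\pi_{\text{human}}(\cdot\mid s)-\pi_{\text{AV}}(\cdot\mid s)\|_1+\left|J(\pi^*_{\text{AV}})-J(\pi_{\text{mix}})\right|.$$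
   Context: For a policy $\pi$, $J(\pi)=\mathbb{E}_{\tau\sim\pi}\left[\sum_{t=0}^\infty\gamma^t R(s_t,a_t)\right]$ where $s_0\sim\mu$, $a_t\sim\pi(\cdot\mid s_t)$, $s_{t+1}\sim P(\cdot\mid s_t,a_t)$. $d_\pi$ denotes the normalized discounted state visitation distribution $d_\pi(s)=(1-\gamma)\sum_{t\ge0}\gamma^t\Pr(s_t=s)$ under $\pi$. $\|\cdot\|_1$ is the $\ell_1$ norm on distributions over actions. *)

(* Defs.v *)
From HB Require Import structures.
From mathcomp Require Import all_boot all_order all_algebra.
From mathcomp Require Import all_classical all_reals all_analysis.
Set Implicit Arguments. Unset Strict Implicit. Unset Printing Implicit Defensive.
Import Order.TTheory GRing.Theory Num.Theory.
Local Open Scope ring_scope.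

Section MDP.
Variables (R : realType) (S A : finType).

Definition is_dist (T : finType) (p : T -> R) : Prop :=
  (forall x, 0 <= p x) /\ \sum_(x : T) p x = 1.

Definition is_policy (pi : S -> A -> R) : Prop := forall s, is_dist (pi s).

Definition is_kernel (P : S -> A -> S -> R) : Prop :=
  forall s a, is_dist (P s a).

Fixpoint state_prob (mu : S -> R) (P : S -> A -> S -> R) (pi : S -> A -> R)
  (t : nat) : S -> R :=
  match t with
  | 0 => mu
  | t'.+1 => fun s' =>
      \sum_(s : S) state_prob mu P pi t' s * \sum_(a : A) pi s a * P s a s'
  end.

(* J(pi) = E[ sum_t gamma^t R(s_t,a_t) ] = sum_t gamma^t E[R(s_t,a_t)] *)
Definition J (mu : S -> R) (P : S -> A -> S -> R) (Rw : S -> A -> R) (gamma : R)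
  (pi : S -> A -> R) : R :=
  limn (fun n => \sum_(0 <= t < n)
     (gamma ^+ t * \sum_(s : S) state_prob mu P pi t s * \sum_(a : A) pi s a * Rw s a)).

Definition visit (mu : S -> R) (P : S -> A -> S -> R) (gamma : R)
  (pi : S -> A -> R) (s : S) : R :=
  (1 - gamma) * limn (fun n => \sum_(0 <= t < n) (gamma ^+ t * state_prob mu P pi t s)).

Definition Eover (d : S -> R) (f : S -> R) : R := \sum_(s : S) d s * f s.

Definition l1 (f : A -> R) : R := \sum_(a : A) `|f a|.

Definition mix_policy (Tsw : S -> bool) (pih piav : S -> A -> R) : S -> A -> R :=
  fun s a => (Tsw s)%:R * pih s a + (1 - (Tsw s)%:R) * piav s a.

Definition Rmax (Rw : S -> A -> R) : R :=
  \big[Num.max/0]_(s : S) \big[Num.max/0]_(a : A) `|Rw s a|.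

End MDP.

(* Main.v *)
Require Import Defs.
From HB Require Import structures.
From mathcomp Require Import all_boot all_order all_algebra.
From mathcomp Require Import all_classical all_reals all_analysis.
From mathcomp Require Import ring lra.
Import Order.TTheory GRing.Theory Num.Theory.
Import numFieldNormedType.Exports.
Local Open Scope classical_set_scope.
Local Open Scope ring_scope.

Section S2.
Variables (R : realType) (S A : finType).
Variables (P : S -> A -> S -> R) (Rw : S -> A -> R) (gamma : R).
Hypothesis hP : is_kernel P.

Definition step (pi : S -> A -> R) (nu : S -> R) : S -> R :=
  fun s' => \sum_(s : S) nu s * \sum_(a : A) pi s a * P s a s'.

Lemma sp_shift pi nu t :
  state_prob nu P pi t.+1 = state_prob (step pi nu) P pi t.
Proof.
elim: t => [//|t IH].
transitivity (fun s' => \sum_(s : S) state_prob nu P pi t.+1 s * \sum_(a : A) pi s a * P s a s') => //.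
by rewrite IH.
Qed.

Lemma sp_ge0 pi nu t : is_policy pi -> (forall s, 0 <= nu s) ->
  forall s, 0 <= state_prob nu P pi t s.
Proof.
move=> hpi hnu; elim: t => [//|t IH] s /=.
apply: sumr_ge0 => x _; apply: mulr_ge0 => //.
apply: sumr_ge0 => a _; apply: mulr_ge0; [exact: (hpi x).1 | exact: (hP x a).1].
Qed.

Lemma push_sum (pi : S -> A -> R) (x W : S -> R) :
  \sum_(s' : S) (\sum_(s : S) x s * \sum_(a : A) pi s a * P s a s') * W s' =
  \sum_(s : S) x s * \sum_(a : A) pi s a * \sum_(s' : S) P s a s' * W s'.
Proof.
under eq_bigr do rewrite mulr_suml.
rewrite exchange_big /=. apply: congr_big => // s _.
under eq_bigr do rewrite -mulrA mulr_suml.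
rewrite -mulr_sumr exchange_big; congr (_ * _); apply: eq_bigr => a _.
rewrite mulr_sumr; apply: eq_bigr => s' _; by rewrite mulrA.
Qed.

Lemma sp_sum pi nu t : is_policy pi ->
  \sum_(s : S) state_prob nu P pi t s = \sum_(s : S) nu s.
Proof.
move=> hpi; elim: t => [//|t IH] /=.
rewrite -IH.
have := push_sum pi (state_prob nu P pi t) (fun _ => 1).
move=> h.
have e : forall (F : S -> R), \sum_s F s = \sum_s F s * 1.
  by move=> F; under [RHS]eq_bigr do rewrite mulr1.
rewrite [LHS]e h; apply: eq_bigr => s _.
under eq_bigr do under eq_bigr do rewrite mulr1.
under eq_bigr do rewrite (hP s _).2 mulr1.
by rewrite (hpi s).2 mulr1.
Qed.


Lemma le_bigmax_seq {I : eqType} (r : seq I) (F : I -> R) x :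
  x \in r -> F x <= \big[Num.max/0]_(i <- r) F i.
Proof.
elim: r => [//|y r IH]; rewrite in_cons big_cons => /orP[/eqP->|h].
  by rewrite le_max lexx.
by rewrite le_max IH ?orbT.
Qed.

Lemma bigmax_ge0 (I : Type) (r : seq I) (F : I -> R) :
  0 <= \big[Num.max/0]_(i <- r) F i.
Proof.
elim: r => [|y r IH]; first by rewrite big_nil.
by rewrite big_cons le_max IH orbT.
Qed.

Lemma Rmax_ge0 : 0 <= Rmax Rw.
Proof. exact: bigmax_ge0. Qed.

Lemma Rw_le s a : `|Rw s a| <= Rmax Rw.
Proof.
rewrite /Rmax.
have h1 := le_bigmax_seq _ (fun s => \big[Num.max/0]_(a : A) `|Rw s a|) _ (mem_index_enum s).
have h2 := le_bigmax_seq _ (fun a => `|Rw s a|) _ (mem_index_enum a).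
exact: le_trans h2 h1.
Qed.

Fixpoint V (pi : S -> A -> R) (k : nat) : S -> R :=
  match k with
  | 0 => fun _ => 0
  | k'.+1 => fun s => \sum_(a : A) pi s a * (Rw s a + gamma * \sum_(s' : S) P s a s' * V pi k' s')
  end.

Lemma JV pi k nu :
  \sum_(0 <= t < k) (gamma ^+ t * \sum_(s : S) state_prob nu P pi t s * \sum_(a : A) pi s a * Rw s a)
  = \sum_(s : S) nu s * V pi k s.
Proof.
elim: k nu => [|k IH] nu.
  by rewrite big_geq // big1 // => s _; rewrite mulr0.
rewrite big_nat_recl // expr0 mul1r.
under eq_bigr do rewrite exprS sp_shift -mulrA.
rewrite -mulr_sumr IH /step push_sum.
rewrite mulr_sumr -big_split /=; apply: eq_bigr => s _.
rewrite mulrCA -mulrDr; congr (_ * _).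
rewrite mulr_sumr -big_split /=; apply: eq_bigr => a _.
by rewrite mulrCA -mulrDr.
Qed.


Hypothesis hg0 : 0 <= gamma.
Hypothesis hg1 : gamma < 1.

Let B := Rmax Rw / (1 - gamma).

Lemma B_ge0 : 0 <= B.
Proof. by rewrite /B divr_ge0 ?Rmax_ge0 // subr_ge0 ltW. Qed.

Lemma B_eq : Rmax Rw + gamma * B = B.
Proof.
rewrite /B; have h : 1 - gamma != 0 by rewrite subr_eq0 eq_sym lt_eqF.
apply: (mulIf h); rewrite mulrDl -mulrA !divfK //.
by rewrite mulrBr mulr1 mulrC addrNK.
Qed.

Lemma Qbound (W : S -> R) s a : (forall s', `|W s'| <= B) ->
  `|Rw s a + gamma * \sum_(s' : S) P s a s' * W s'| <= B.
Proof.
move=> hW; rewrite -B_eq; apply: le_trans (ler_normD _ _) _.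
apply: lerD; first exact: Rw_le.
rewrite normrM ger0_norm //; apply: ler_wpM2l => //.
apply: le_trans (ler_norm_sum _ _ _) _.
apply: (@le_trans _ _ (\sum_(s' : S) P s a s' * B)).
  apply: ler_sum => s' _; rewrite normrM ger0_norm; last exact: (hP s a).1.
  by apply: ler_wpM2l => //; exact: (hP s a).1.
by rewrite -mulr_suml (hP s a).2 mul1r.
Qed.

Lemma polbound (pi : S -> A -> R) s (q : A -> R) : is_policy pi ->
  (forall a, `|q a| <= B) -> `|\sum_(a : A) pi s a * q a| <= B.
Proof.
move=> hpi hq; apply: le_trans (ler_norm_sum _ _ _) _.
apply: (@le_trans _ _ (\sum_(a : A) pi s a * B)).
  apply: ler_sum => a _; rewrite normrM ger0_norm; last exact: (hpi s).1.
  by apply: ler_wpM2l => //; exact: (hpi s).1.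
by rewrite -mulr_suml (hpi s).2 mul1r.
Qed.

Lemma Vbound pi k s : is_policy pi -> `|V pi k s| <= B.
Proof.
move=> hpi; elim: k s => [|k IH] s /=; first by rewrite normr0 B_ge0.
apply: polbound => // a; exact: Qbound.
Qed.

Lemma step_ineq (pi1 pi2 : S -> A -> R) (x : S -> R) k :
  is_policy pi2 -> (forall s, 0 <= x s) ->
  \sum_(s : S) x s * \sum_(a : A) pi1 s a * Rw s a
  + gamma * \sum_(s' : S) step pi1 x s' * V pi2 k s'
  - \sum_(s : S) x s * V pi2 k.+1 s
  <= B * \sum_(s : S) x s * l1 (fun a => pi1 s a - pi2 s a).
Proof.
move=> hpi2 hx.
rewrite /step push_sum !mulr_sumr -big_split -sumrB /=.
apply: ler_sum => s _.
set Q := fun a => Rw s a + gamma * \sum_(s' : S) P s a s' * V pi2 k s'.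
have e : \sum_(a : A) (pi1 s a - pi2 s a) * Q a =
   \sum_(a : A) pi1 s a * Rw s a + gamma * \sum_(a : A) pi1 s a * \sum_(s' : S) P s a s' * V pi2 k s'
   - \sum_(a : A) pi2 s a * Q a.
  under eq_bigr do rewrite mulrBl; rewrite sumrB; congr (_ - _).
  rewrite /Q; under eq_bigr do rewrite mulrDr; rewrite big_split mulr_sumr; congr (_ + _).
  by apply: eq_bigr => a _; rewrite mulrCA.
rewrite mulrCA -mulrDr -mulrBr -e mulrCA; apply: ler_wpM2l => //.
rewrite mulr_sumr; apply: le_trans (ler_norm _) _.
apply: le_trans (ler_norm_sum _ _ _) _; apply: ler_sum => a _.
rewrite normrM mulrC; apply: ler_wpM2r => //.
by apply: Qbound => s0; apply: Vbound.
Qed.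


Lemma tele (mu : S -> R) pi1 pi2 : is_policy pi1 -> is_policy pi2 ->
  (forall s, 0 <= mu s) -> forall t k,
  \sum_(0 <= u < t) (gamma ^+ u * \sum_(s : S) state_prob mu P pi1 u s * \sum_(a : A) pi1 s a * Rw s a)
  + gamma ^+ t * \sum_(s : S) state_prob mu P pi1 t s * V pi2 k s
  - \sum_(s : S) mu s * V pi2 (t + k) s
  <= B * \sum_(0 <= u < t) (gamma ^+ u * \sum_(s : S) state_prob mu P pi1 u s * l1 (fun a => pi1 s a - pi2 s a)).
Proof.
move=> hpi1 hpi2 hmu; elim=> [|t IH] k.
  by rewrite !big_geq // expr0 mul1r add0n add0r subrr mulr0.
rewrite !big_nat_recr //=.
have h1 := IH k.+1.
have h2 := step_ineq pi1 pi2 (state_prob mu P pi1 t) k hpi2 (sp_ge0 pi1 mu t hpi1 hmu).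
have h3 := ler_wpM2l (exprn_ge0 t hg0) h2.
rewrite exprS; rewrite addnS in h1.
move: h1 h3.
move=> h1 h3; rewrite /step in h3; lra.
Qed.

End S2.

Section S1.
Variable R : realType.
Variable gamma : R.
Hypothesis hg0 : 0 <= gamma.
Hypothesis hg1 : gamma < 1.

Lemma geo_cvg (a : nat -> R) c : (forall t, `|a t| <= c) ->
  cvgn (fun n => \sum_(0 <= t < n) gamma ^+ t * a t).
Proof.
move=> hc.
have c0 : 0 <= c by apply: le_trans (hc 0%N).
have := @normed_cvg R R^o (fun t => gamma ^+ t * a t).
apply.
apply: (@series_le_cvg R (fun t => `|gamma ^+ t * a t|) (geometric c gamma)).
- by move=> n.
- by move=> n; rewrite /geometric /= mulr_ge0 // exprn_ge0.
- move=> n; rewrite /geometric /= normrM ger0_norm ?exprn_ge0 // mulrC.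
  by rewrite ler_wpM2r ?exprn_ge0.
- apply: is_cvg_geometric_series; rewrite ger0_norm //.
Qed.
End S1.

Section T.
Variables (R : realType).
Lemma cvg_sumS (S : finType) (F : S -> nat -> R) (l : S -> R) :
  (forall s, F s @ \oo --> l s) -> (fun n => \sum_(s : S) F s n) @ \oo --> \sum_(s : S) l s.
Proof. move=> h; apply: cvg_big => //; exact: add_continuous. Qed.

Lemma distbound (T : finType) (p q : T -> R) c : (forall x, 0 <= p x) ->
  \sum_(x : T) p x = 1 -> (forall x, `|q x| <= c) -> `|\sum_(x : T) p x * q x| <= c.
Proof.
move=> hp h1 hq; apply: le_trans (ler_norm_sum _ _ _) _.
apply: (@le_trans _ _ (\sum_(x : T) p x * c)).
  apply: ler_sum => x _; rewrite normrM ger0_norm //.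
  by apply: ler_wpM2l.
by rewrite -mulr_suml h1 mul1r.
Qed.

Lemma le_sum1 (T : finType) (p : T -> R) x : (forall x, 0 <= p x) -> p x <= \sum_(y : T) p y.
Proof.
move=> hp; rewrite (bigD1 x) //= lerDl; exact: sumr_ge0.
Qed.
End T.

Theorem theoremA4 (R : realType) (S A : finType)
  (mu : S -> R) (P : S -> A -> S -> R) (Rw : S -> A -> R) (gamma : R)
  (pih piav pistar : S -> A -> R) (Tsw : S -> bool) :
  0 < gamma < 1 ->
  is_dist mu -> is_kernel P ->
  is_policy pih -> is_policy piav ->
  let pimix := mix_policy Tsw pih piav in
  let dmix := visit mu P gamma pimix in
  let D := Eover dmix (fun s => l1 (fun a => pih s a - piav s a)) in
  0 < D ->
  let beta := Eover dmix (fun s => l1 (fun a => (Tsw s)%:R * (pih s a - piav s a))) / D in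
  is_policy pistar ->
  (forall pi, is_policy pi -> J mu P Rw gamma pi <= J mu P Rw gamma pistar) ->
  `|J mu P Rw gamma pistar - J mu P Rw gamma piav|
    <= beta * Rmax Rw / (1 - gamma) ^+ 2 * D
       + `|J mu P Rw gamma pistar - J mu P Rw gamma pimix|.
Proof.
move=> /andP[hg0' hg1] hmu hP hpih hpiav pimix dmix D hD beta hstar hopt.
have hg0 : 0 <= gamma := ltW hg0'.
have hmix : is_policy pimix.
  move=> s; have -> : pimix s = if Tsw s then pih s else piav s.
    apply/funext => a; rewrite /pimix /mix_policy; case: (Tsw s) => /=; lra.
  by case: (Tsw s); [exact: hpih | exact: hpiav].
pose Jn pi n := \sum_(0 <= t < n) (gamma ^+ t * \sum_(s : S) state_prob mu P pi t s * \sum_(a : A) pi s a * Rw s a).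
have hJc : forall pi, is_policy pi -> cvgn (Jn pi).
  move=> pi hpi; apply: (@geo_cvg R gamma hg0 hg1 _ (Rmax Rw)) => t.
  apply: distbound.
  - exact: sp_ge0 hP pi mu t hpi hmu.1.
  - by rewrite sp_sum // hmu.2.
  - move=> s; apply: distbound; [exact: (hpi s).1 | exact: (hpi s).2 | exact: Rw_le].
pose x t s := state_prob mu P pimix t s.
pose f s := l1 (fun a => pimix s a - piav s a).
pose g s n := \sum_(0 <= t < n) gamma ^+ t * x t s.
pose B := Rmax Rw / (1 - gamma).
have hx0 : forall t s, 0 <= x t s by move=> t s; exact: sp_ge0 hP pimix mu t hmix hmu.1 s.
have hgc : forall s, cvgn (g s).
  move=> s; apply: (@geo_cvg R gamma hg0 hg1 _ 1) => t.
  rewrite ger0_norm // -hmu.2 -(sp_sum _ _ _ _ hP pimix mu t hmix); exact: le_sum1.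
have hc0 : 1 - gamma != 0 by rewrite subr_eq0 eq_sym lt_eqF.
have hvis : forall s, limn (g s) = dmix s / (1 - gamma).
  by move=> s; rewrite /dmix /visit [(1 - gamma) * _]mulrC mulfK.
have hineq : forall n, Jn pimix n - Jn piav n <= B * \sum_(s : S) g s n * f s.
  move=> n; have := tele _ _ _ _ Rw _ hP hg0 hg1 _ _ _ hmix hpiav hmu.1 n 0.
  rewrite addn0 -(JV _ _ _ P Rw gamma piav n mu).
  have e0 : \sum_(s : S) state_prob mu P pimix n s * V R S A P Rw gamma piav 0 s = 0.
    by rewrite big1 // => s _; rewrite mulr0.
  rewrite e0 mulr0 addr0 => h; apply: le_trans h _.
  rewrite /B; apply: ler_wpM2l; first by rewrite divr_ge0 ?Rmax_ge0 // subr_ge0 ltW.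
  rewrite /g; under eq_bigr do rewrite mulr_sumr.
  rewrite exchange_big /=; apply: ler_sum => s _.
  rewrite mulr_suml; apply: ler_sum => t _; by rewrite mulrA.
have hY : (fun n => B * \sum_(s : S) g s n * f s) @ \oo --> B * \sum_(s : S) (dmix s / (1 - gamma)) * f s.
  apply: cvgMl_tmp; apply: cvg_sumS => s; apply: cvgMr_tmp; rewrite -hvis; exact: hgc.
have hle : J mu P Rw gamma pimix - J mu P Rw gamma piav <= B * \sum_(s : S) (dmix s / (1 - gamma)) * f s.
  rewrite /J -/(Jn pimix) -/(Jn piav) -limB; [|exact: hJc|exact: hJc].
  rewrite -(cvg_lim _ hY) //; apply: ler_lim.
  - by apply: is_cvgB; exact: hJc.
  - exact: cvgP hY.
  - by apply: nearW => n; exact: hineq.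
have ef : forall s, f s = l1 (fun a => (Tsw s)%:R * (pih s a - piav s a)).
  move=> s; rewrite /f /l1; apply: eq_bigr => a _; congr `|_|.
  rewrite /pimix /mix_policy; ring.
have e2 : B * \sum_(s : S) (dmix s / (1 - gamma)) * f s = beta * Rmax Rw / (1 - gamma) ^+ 2 * D.
  have hD0 : D != 0 by rewrite gt_eqF.
  rewrite /beta /Eover /B.
  have -> : \sum_(s : S) (dmix s / (1 - gamma)) * f s = (\sum_(s : S) dmix s * f s) / (1 - gamma).
    by rewrite mulr_suml; apply: eq_bigr => s _; rewrite mulrAC.
  under [in RHS]eq_bigr do rewrite -ef.
  by field; rewrite hD0 hc0.
have hJav := hopt _ hpiav.
rewrite ger0_norm ?subr_ge0 // -e2.
have := ler_norm (J mu P Rw gamma pistar - J mu P Rw gamma pimix).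
move: hle; lra.
Qed.
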